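(* Let $\tau$ be a tau-function of the extended bigraded Toda hierarchy with wave operators $W,\bar W$. For a difference operator $a$ commuting with $L$ and a function $h(s,\mathbf t,\bar{\mathbf t},\mathbf x)$, say that $(a,h)$ satisfies the ASvM relations if $$-\frac{(a_-W)z^s}{Wz^s}=G(z)\frac h\tau-\frac h\tau,\qquad \frac{(a_+\bar W)z^s}{\bar Wz^s}=\bar G(z)\frac h\tau-\frac h\tau.$$ Then for every $n\ge1$ and $p\ge0$ the pairs $(L^{\frac nk},\partial_{t_n}\tau)$, $(L^{\frac nm},\partial_{\bar t_n}\tau)$, $(2L^p\log L,\partial_{x_p}\tau)$ and $(L^0,s\tau)$ satisfy the ASvM relations (here $\partial_{x_0}=\partial_s$ and $L^0=1$). Equivalently, the induced vector fields on tau-functions are $\partial_{t_n}$, $\partial_{\bar t_n}$, $\partial_{x_p}$ and multiplication by $x_0=s$, up to adding a function from $\mathcal F$.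
   Context: Let $s$ be a variable, $\Lambda$ the shift $(\Lambda f)(s)=f(s+1)$, $\mathcal A$ the space of formal difference operators $\sum_{i\in\mathbb Z}a_i(s)\Lambda^i$, $A_+=\sum_{i\ge0}a_i\Lambda^i$, $A_-=\sum_{i<0}a_i\Lambda^i$, products $(a(s)\Lambda^i)(b(s)\Lambda^j)=a(s)b(s+i)\Lambda^{i+j}$ where defined; operators act on $z^s$ by $(a(s)\Lambda^i\partial_s^j)z^s=a(s)z^i(\log z)^jz^s$. Fix $k,m\ge1$. Variables: $s=x_0$, $\mathbf x=(x_1,\dots)$, $\mathbf t=(t_1,\dots)$, $\bar{\mathbf t}=(\bar t_1,\dots)$, where $t_{nk}$ and $\bar t_{nm}$ are distinct variables. Let $[z]=(z,z^2/2,z^3/3,\dots)$; for a function $g(s,\mathbf t,\bar{\mathbf t},\mathbf x)$ put $G(z)g=g(s,\mathbf t-[z^{-1}],\bar{\mathbf t},\mathbf x)$, $\bar G(z)g=g(s+1,\mathbf t,\bar{\mathbf t}+[z],\mathbf x)$. A tau-function of the EBTH is a function $\tau(s,\mathbf t,\bar{\mathbf t},\mathbf x)$ such that, writing $G(z)\tau/\tau=1+\sum_{i\ge1}w_iz^{-i}$ and $\bar G(z)\tau/\tau=\sum_{i\ge0}\bar w_iz^i$, the wave operators $W=1+\sum_{i\ge1}w_i\Lambda^{-i}$, $\bar W=\sum_{i\ge0}\bar w_i\Lambda^i$ ($\bar w_0\ne0$) satisfy $W\Lambda^kW^{-1}=\bar W\Lambda^{-m}\bar W^{-1}=:L$, $L=\Lambda^k+u_{k-1}\Lambda^{k-1}+\dots+u_{-m}\Lambda^{-m}$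 ($u_{-m}\ne0$), and the EBTH flows $\partial_{t_n}W=-(L^{\frac nk})_-W$, $\partial_{t_n}\bar W=(L^{\frac nk})_+\bar W$, $\partial_{\bar t_n}W=-(L^{\frac nm})_-W$, $\partial_{\bar t_n}\bar W=(L^{\frac nm})_+\bar W$ ($n\ge1$), $\partial_{x_n}W=-(2L^n\log L)_-W$, $\partial_{x_n}\bar W=(2L^n\log L)_+\bar W$ ($n\ge0$). Here for $n\in\mathbb Z$, $L^{\frac nk}:=W\Lambda^nW^{-1}$, $L^{\frac nm}:=\bar W\Lambda^{-n}\bar W^{-1}$, and $\log L=\frac12W\partial_sW^{-1}-\frac12\bar W\partial_s\bar W^{-1}$. $\mathcal F$ is the space of functions $f(s,\mathbf x)$ with $f(s+1,\mathbf x)=f(s,\mathbf x)$. *)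

(* Defs.v *)
From HB Require Import structures.
From mathcomp Require Import all_boot all_order all_algebra.
Set Implicit Arguments. Unset Strict Implicit. Unset Printing Implicit Defensive.
Import Order.TTheory GRing.Theory Num.Theory.
Local Open Scope ring_scope.

(* The independent variables:  VT n = t_n (n >= 1),  VTb n = \bar t_n (n >= 1),
   VX p = x_p (p >= 0), with x_0 = s. *)
Inductive var := VT of nat | VTb of nat | VX of nat.

(* A ring of "functions g(s, t, tbar, x)": the shift s |-> s+1 (sh, inverse shi),
   the partial derivatives der v = d/dv, and the coordinate function s. *)
Record ebth_data (A : comUnitRingType) := EbthData {
  sh : A -> A; shi : A -> A; der : var -> A -> A; svar : A }.

Record ebth_axioms (A : comUnitRingType) (D : ebth_data A) : Prop := {
  sh_add : forall a b, sh D (a + b) = sh D a + sh D b;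
  sh_mul : forall a b, sh D (a * b) = sh D a * sh D b;
  sh_one : sh D 1 = 1;
  sh_shiK : cancel (sh D) (shi D);
  shi_shK : cancel (shi D) (sh D);
  der_add : forall v a b, der D v (a + b) = der D v a + der D v b;
  der_mul : forall v a b, der D v (a * b) = der D v a * b + a * der D v b;
  der_comm : forall v w a, der D v (der D w a) = der D w (der D v a);
  der_sh : forall v a, der D v (sh D a) = sh D (der D v a);
  sh_svar : sh D (svar D) = svar D + 1;
  der_svar_s : der D (VX 0) (svar D) = 1;
  der_svar_other : forall v, v <> VX 0 -> der D v (svar D) = 0;
  nat_unit : forall n : nat, (n.+1)%:R \is a @GRing.unit A }.

Section Defs.
End Defs.

Definition shz (A : comUnitRingType) (D : ebth_data A) (i : int) (a : A) : A :=
  match i with Posz n => iter n (sh D) a | Negz n => iter n.+1 (shi D) a end.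

(* formal difference operators  sum_i P(i) Lambda^i  *)
Definition op (A : comUnitRingType) := int -> A.

Definition lam (A : comUnitRingType) (n : int) : op A :=
  fun l => if l == n then 1 else 0.

(* product of operators supported in (-oo, N1] and (-oo, N2] *)
Definition mul_lo (A : comUnitRingType) (D : ebth_data A) (N1 N2 : int)
  (P Q : op A) : op A := fun l =>
  if l <= N1 + N2 then
    \sum_(j < (absz (N1 + N2 - l)%R).+1)
       P (N1 - (j : nat)%:Z) * shz D (N1 - (j : nat)%:Z) (Q (l - (N1 - (j : nat)%:Z)))
  else 0.

(* product of operators supported in [M1, +oo) and [M2, +oo) *)
Definition mul_up (A : comUnitRingType) (D : ebth_data A) (M1 M2 : int)
  (P Q : op A) : op A := fun l =>
  if M1 + M2 <= l then
    \sum_(j < (absz (l - M1 - M2)%R).+1)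
       P (M1 + (j : nat)%:Z) * shz D (M1 + (j : nat)%:Z) (Q (l - (M1 + (j : nat)%:Z)))
  else 0.

Definition negp (A : comUnitRingType) (P : op A) : op A :=
  fun l => if l < 0 then P l else 0.
Definition posp (A : comUnitRingType) (P : op A) : op A :=
  fun l => if 0 <= l then P l else 0.
Definition dcoef (A : comUnitRingType) (d : A -> A) (P : op A) : op A :=
  fun l => d (P l).

(* g_0 = c_0^-1, g_i = - c_0^-1 sum_{j=1}^i c_j (tw j (g_{i-j})) : coefficients
   of the (right) inverse of sum c_i X^i when X c = (tw 1 c) X. *)
Fixpoint inv_aux (A : comUnitRingType) (c : nat -> A) (tw : nat -> A -> A)
  (n : nat) : seq A :=
  match n with
  | 0 => [:: (c 0%N)^-1]
  | n'.+1 => let prev := inv_aux c tw n' in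
      rcons prev (- (c 0%N)^-1 *
        \sum_(j < n'.+1) c j.+1 * tw j.+1 (nth 0 prev (n' - j)))
  end.
Definition seq_inv (A : comUnitRingType) (c : nat -> A) (tw : nat -> A -> A)
  (i : nat) : A := nth 0 (inv_aux c tw i) i.

Definition fps_mul (A : comUnitRingType) (f g : nat -> A) (i : nat) : A :=
  \sum_(j < i.+1) f j * g (i - j)%N.
Definition fps_inv (A : comUnitRingType) (f : nat -> A) : nat -> A :=
  seq_inv f (fun _ x => x).

(* coefficients E_N of exp(sum_{j>=1} u^j d_j / j) applied to g:
   E_0 g = g,  N E_N g = sum_{j=1}^N d_j (E_{N-j} g). *)
Fixpoint exp_aux (A : comUnitRingType) (d : nat -> A -> A) (g : A) (n : nat)
  : seq A :=
  match n with
  | 0 => [:: g]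
  | n'.+1 => let prev := exp_aux d g n' in
      rcons prev ((n'.+1)%:R^-1 * \sum_(j < n'.+1) d j.+1 (nth 0 prev (n' - j)))
  end.
Definition exp_ser (A : comUnitRingType) (d : nat -> A -> A) (g : A) (N : nat)
  : A := nth 0 (exp_aux d g N) N.

(* G(z) g = g(s, t - [z^-1], tbar, x) = sum_N Gser g N z^-N  (Taylor expansion)
   Gbar(z) g = g(s+1, t, tbar + [z], x) = sum_N Gbser g N z^N *)
Definition Gser (A : comUnitRingType) (D : ebth_data A) (g : A) (N : nat) : A :=
  exp_ser (fun j a => - der D (VT j) a) g N.
Definition Gbser (A : comUnitRingType) (D : ebth_data A) (g : A) (N : nat) : A :=
  sh D (exp_ser (fun j a => der D (VTb j) a) g N).

(* wave operators of tau:  G(z)tau/tau = sum w_i z^-i, Gbar(z)tau/tau = sum wb_i z^i *)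
Definition wco (A : comUnitRingType) (D : ebth_data A) (tau : A) (i : nat) : A :=
  Gser D tau i * tau^-1.
Definition wbco (A : comUnitRingType) (D : ebth_data A) (tau : A) (i : nat) : A :=
  Gbser D tau i * tau^-1.

Definition Wop (A : comUnitRingType) (D : ebth_data A) (tau : A) : op A :=
  fun l => if l <= 0 then wco D tau (absz l) else 0.
Definition Winvop (A : comUnitRingType) (D : ebth_data A) (tau : A) : op A :=
  fun l => if l <= 0 then
    seq_inv (wco D tau) (fun j => shz D (- (j%:Z))) (absz l) else 0.
Definition Wbop (A : comUnitRingType) (D : ebth_data A) (tau : A) : op A :=
  fun l => if 0 <= l then wbco D tau (absz l) else 0.
Definition Wbinvop (A : comUnitRingType) (D : ebth_data A) (tau : A) : op A :=
  fun l => if 0 <= l then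
    seq_inv (wbco D tau) (fun j => shz D (j%:Z)) (absz l) else 0.

(* L^{n/k} := W Lambda^n W^-1,  L^{n/m} := Wbar Lambda^-n Wbar^-1 *)
Definition Lk (A : comUnitRingType) (D : ebth_data A) (tau : A) (n : nat) : op A :=
  mul_lo D n%:Z 0 (mul_lo D 0 n%:Z (Wop D tau) (lam A n%:Z)) (Winvop D tau).
Definition Lm (A : comUnitRingType) (D : ebth_data A) (tau : A) (n : nat) : op A :=
  mul_up D (- n%:Z) 0 (mul_up D 0 (- n%:Z) (Wbop D tau) (lam A (- n%:Z)))
    (Wbinvop D tau).

(* L^p, with L = W Lambda^k W^-1 *)
Fixpoint Lpow (A : comUnitRingType) (D : ebth_data A) (tau : A) (k p : nat)
  : op A :=
  match p with
  | 0 => lam A 0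
  | p'.+1 => mul_lo D k%:Z (p' * k)%N%:Z (Lk D tau k) (Lpow D tau k p')
  end.

(* log L = 1/2 W d_s W^-1 - 1/2 Wbar d_s Wbar^-1.  Since
   W d_s W^-1 = d_s + W (d_s W^-1) (coefficientwise derivative of W^-1), the
   d_s terms cancel and log L = logLlo + logLup with: *)
Definition logLlo (A : comUnitRingType) (D : ebth_data A) (tau : A) : op A :=
  fun l => 2^-1 * mul_lo D 0 0 (Wop D tau) (dcoef (der D (VX 0)) (Winvop D tau)) l.
Definition logLup (A : comUnitRingType) (D : ebth_data A) (tau : A) : op A :=
  fun l => - (2^-1 * mul_up D 0 0 (Wbop D tau)
                        (dcoef (der D (VX 0)) (Wbinvop D tau)) l).

Definition LplogL2 (A : comUnitRingType) (D : ebth_data A) (tau : A)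
  (k m p : nat) : op A := fun l =>
  2 * (mul_lo D (p * k)%N%:Z 0 (Lpow D tau k p) (logLlo D tau) l
       + mul_up D (- (p * m)%N%:Z) 0 (Lpow D tau k p) (logLup D tau) l).

Definition is_tau (A : comUnitRingType) (D : ebth_data A) (k m : nat) (tau : A)
  : Prop :=
  [/\ tau \is a GRing.unit,
      (forall l, Lk D tau k l = Lm D tau m l)
      /\ Lk D tau k k%:Z = 1
      /\ (forall l, (l < - m%:Z) || (k%:Z < l) -> Lk D tau k l = 0)
      /\ Lk D tau k (- m%:Z) != 0,
      (forall n, (0 < n)%N -> forall l,
         dcoef (der D (VT n)) (Wop D tau) l
           = - mul_lo D (-1) 0 (negp (Lk D tau n)) (Wop D tau) l
         /\ dcoef (der D (VT n)) (Wbop D tau) l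
           = mul_up D 0 0 (posp (Lk D tau n)) (Wbop D tau) l),
      (forall n, (0 < n)%N -> forall l,
         dcoef (der D (VTb n)) (Wop D tau) l
           = - mul_lo D (-1) 0 (negp (Lm D tau n)) (Wop D tau) l
         /\ dcoef (der D (VTb n)) (Wbop D tau) l
           = mul_up D 0 0 (posp (Lm D tau n)) (Wbop D tau) l)
    & (forall p l,
         dcoef (der D (VX p)) (Wop D tau) l
           = - mul_lo D (-1) 0 (negp (LplogL2 D tau k m p)) (Wop D tau) l
         /\ dcoef (der D (VX p)) (Wbop D tau) l
           = mul_up D 0 0 (posp (LplogL2 D tau k m p)) (Wbop D tau) l)].

Definition ASvM (A : comUnitRingType) (D : ebth_data A) (tau : A) (a : op A)
  (h : A) : Prop :=
  let r := h * tau^-1 in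
  (forall i : nat,
     fps_mul (fun j => - mul_lo D (-1) 0 (negp a) (Wop D tau) (- j%:Z))
             (fps_inv (wco D tau)) i
     = Gser D r i - (if i == 0%N then r else 0))
  /\ (forall i : nat,
     fps_mul (fun j => mul_up D 0 0 (posp a) (Wbop D tau) j%:Z)
             (fps_inv (wbco D tau)) i
     = Gbser D r i - (if i == 0%N then r else 0)).

(* Main.v *)
Require Import Defs.
From HB Require Import structures.
From mathcomp Require Import all_boot all_order all_algebra.
From mathcomp Require Import ring zify.
Import Order.TTheory GRing.Theory Num.Theory.
Local Open Scope ring_scope.



Section Aux.
Variable A : comUnitRingType.

Lemma sum_tri_swap (f : nat -> nat -> A) N :
 \sum_(j < N.+1) \sum_(i < (N - j).+1) f j i =
 \sum_(i < N.+1) \sum_(j < (N - i).+1) f j i.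
Proof.
have E1 : forall (g : nat -> nat -> A), \sum_(j < N.+1) \sum_(i < (N - j).+1) g j i =
   \sum_(j < N.+1) \sum_(i < N.+1) (if (j + i <= N)%N then g j i else 0).
  move=> g; apply: eq_bigr => j _.
  rewrite (big_ord_widen N.+1 (g j)); last by rewrite ltnS leq_subr.
  rewrite big_mkcond; apply: eq_bigr => i _.
  have ->: (i < (N - j).+1)%N = (j + i <= N)%N.
    have := ltn_ord j; lia.
  by [].
rewrite E1 (E1 (fun i j => f j i)) exchange_big /=.
apply: eq_bigr => i _; apply: eq_bigr => j _.
by rewrite addnC.
Qed.

Lemma sum_tri (f : nat -> nat -> A) N :
 \sum_(j < N.+1) \sum_(i < (N - j).+1) f j (j + i)%N =
 \sum_(k < N.+1) \sum_(j < k.+1) f j k.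
Proof.
have -> : \sum_(k < N.+1) \sum_(j < k.+1) f j k =
   \sum_(k < N.+1) \sum_(j < N.+1) (if (j <= k)%N then f j k else 0).
  apply: eq_bigr => k _.
  rewrite (big_ord_widen N.+1 (fun j => f j k)) ?ltn_ord // big_mkcond.
  by [].
rewrite exchange_big /=; apply: eq_bigr => j _.
rewrite -big_mkcond /=.
rewrite (eq_bigl (fun k : 'I_N.+1 => predT (k : nat) && (j <= k)%N)) //.
rewrite -big_geq_mkord.
rewrite (_ : \sum_(j <= i < N.+1 | predT i) f j i =
   \sum_(0 + j <= i < N.+1 | predT i) f j i) // big_addn big_mkord subSn; last by rewrite -ltnS.
by apply: eq_bigr => i _; rewrite addnC.
Qed.

End Aux.



Section Exp.
Variable A : comUnitRingType.
Variable d : nat -> A -> A.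

Lemma exp_aux_size g n : size (exp_aux d g n) = n.+1.
Proof. by elim: n => //= n IH; rewrite size_rcons IH. Qed.

Lemma exp_aux_nth g n i : (i <= n)%N -> nth 0 (exp_aux d g n) i = exp_ser d g i.
Proof.
elim: n => [|n IH]; first by rewrite leqn0 => /eqP ->.
rewrite leq_eqVlt => /orP [/eqP -> //|Hi].
by rewrite /= nth_rcons exp_aux_size Hi IH.
Qed.

Lemma exp_serS g N : exp_ser d g N.+1 =
  (N.+1)%:R^-1 * \sum_(j < N.+1) d j.+1 (exp_ser d g (N - j)).
Proof.
rewrite /exp_ser /= nth_rcons exp_aux_size ltnn eqxx.
congr (_ * _); apply: eq_bigr => j _.
by rewrite exp_aux_nth // leq_subr.
Qed.

Hypothesis dD : forall j a b, d j (a + b) = d j a + d j b.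
Hypothesis dM : forall j a b, d j (a * b) = d j a * b + a * d j b.
Hypothesis nU : forall n : nat, (n.+1)%:R \is a @GRing.unit A.

Lemma d0 j : d j 0 = 0.
Proof. by apply: (@addrI _ (d j 0)); rewrite -dD !addr0. Qed.

Lemma d_sum j (I : Type) (r : seq I) (P : pred I) (F : I -> A) :
  d j (\sum_(i <- r | P i) F i) = \sum_(i <- r | P i) d j (F i).
Proof. apply: (big_morph (d j)); [exact: dD | exact: d0]. Qed.

Lemma exp_serSm g N : (N.+1)%:R * exp_ser d g N.+1 =
  \sum_(j < N.+1) d j.+1 (exp_ser d g (N - j)).
Proof. by rewrite exp_serS mulrA divrr // mul1r. Qed.

Lemma exp_ser_mul a b N : exp_ser d (a * b) N =
  \sum_(i < N.+1) exp_ser d a i * exp_ser d b (N - i).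
Proof.
move: N; apply: ltn_ind => -[|N] IH.
  by rewrite big_ord1.
apply: (mulrI (nU N)); rewrite exp_serSm.
have -> : \sum_(j < N.+1) d j.+1 (exp_ser d (a * b) (N - j)) =
   \sum_(j < N.+1) \sum_(i < (N - j).+1)
      (d j.+1 (exp_ser d a i) * exp_ser d b (N - (j + i))
       + exp_ser d a i * d j.+1 (exp_ser d b (N - j - i))).
  apply: eq_bigr => j _; rewrite IH; last by rewrite ltnS leq_subr.
  rewrite d_sum; apply: eq_bigr => i _; rewrite dM subnDA //.
rewrite mulr_sumr.
have -> : \sum_(i < N.+2) (N.+1)%:R * (exp_ser d a i * exp_ser d b (N.+1 - i)) =
  \sum_(i < N.+2) (i%:R * exp_ser d a i * exp_ser d b (N.+1 - i))
  + \sum_(i < N.+2) (exp_ser d a i * ((N.+1 - i)%:R * exp_ser d b (N.+1 - i))).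
  rewrite -big_split /=; apply: eq_bigr => i _.
  have := ltn_ord i => Hi.
  have -> : (N.+1)%:R = i%:R + (N.+1 - i)%:R :> A by rewrite -natrD subnKC // -ltnS.
  by rewrite mulrDl mulrA mulrCA.
under eq_bigr do rewrite big_split /=.
rewrite big_split /=; congr (_ + _).
  rewrite [RHS]big_ord_recl /= mulr0n !mul0r add0r.
  rewrite [RHS](eq_bigr (fun k : 'I_N.+1 => \sum_(j < k.+1)
       d j.+1 (exp_ser d a (k - j)) * exp_ser d b (N - k))); last first.
    move=> k _; rewrite /bump leq0n add1n exp_serSm subSS mulr_suml //.
  rewrite -(@sum_tri A (fun j k => d j.+1 (exp_ser d a (k - j)) * exp_ser d b (N - k))).
  apply: eq_bigr => j _; apply: eq_bigr => i _.
  by rewrite addKn.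
rewrite [RHS]big_ord_recr /= subnn mulr0n mul0r mulr0 addr0.
rewrite (@sum_tri_swap A (fun j i => exp_ser d a i * d j.+1 (exp_ser d b (N - j - i)))).
apply: eq_bigr => i _.
have := ltn_ord i => Hi.
rewrite subSn // exp_serSm mulr_sumr; apply: eq_bigr => j _.
by rewrite subnAC.
Qed.

Lemma exp_ser_const g : (forall j, d j g = 0) -> forall N, exp_ser d g N.+1 = 0.
Proof.
move=> Hg; apply: ltn_ind => N IH.
rewrite exp_serS big1 ?mulr0 // => j _.
case Hj: (N - j)%N => [|M]; first by rewrite Hg.
rewrite IH ?d0 //.
have := ltn_ord j; lia.
Qed.

End Exp.



Section Inv.
Variable A : comUnitRingType.

Lemma inv_aux_size c tw n : size (@inv_aux A c tw n) = n.+1.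
Proof. by elim: n => //= n IH; rewrite size_rcons IH. Qed.

Lemma inv_aux_nth c tw n i : (i <= n)%N -> nth 0 (@inv_aux A c tw n) i = seq_inv c tw i.
Proof.
elim: n => [|n IH]; first by rewrite leqn0 => /eqP ->.
rewrite leq_eqVlt => /orP [/eqP -> //|Hi].
by rewrite /= nth_rcons inv_aux_size Hi IH.
Qed.

Lemma seq_invS (c : nat -> A) tw n : seq_inv c tw n.+1 =
  - (c 0%N)^-1 * \sum_(j < n.+1) c j.+1 * tw j.+1 (seq_inv c tw (n - j)).
Proof.
rewrite /seq_inv /= nth_rcons inv_aux_size ltnn eqxx.
congr (_ * _); apply: eq_bigr => j _.
by rewrite inv_aux_nth // leq_subr.
Qed.

Lemma fps_inv_uniq (c h : nat -> A) : c 0%N \is a GRing.unit ->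
  (forall i, fps_mul c h i = if i == 0%N then 1 else 0) ->
  forall i, h i = fps_inv c i.
Proof.
move=> Hu Hh; apply: ltn_ind => -[|n] IH.
  have := Hh 0%N; rewrite /fps_mul big_ord1 /= => H0.
  by rewrite /fps_inv /seq_inv /= -[h 0%N](mulKr Hu) H0 mulr1.
have := Hh n.+1; rewrite /fps_mul big_ord_recl /= subn0 => /eqP.
rewrite addr_eq0 => /eqP H1.
rewrite /fps_inv seq_invS -[h n.+1](mulKr Hu) H1 mulrN mulNr.
congr (- (_ * _)); apply: eq_bigr => j _.
rewrite /bump leq0n add1n subSS IH //.
have := ltn_ord j; lia.
Qed.

Lemma fps_mul_ext (f f' g g' : nat -> A) i :
  (forall j, f j = f' j) -> (forall j, g j = g' j) ->
  fps_mul f g i = fps_mul f' g' i.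
Proof. by move=> Hf Hg; apply: eq_bigr => j _; rewrite Hf Hg. Qed.

End Inv.

Section Key.
Variable A : comUnitRingType.
Variable F : A -> nat -> A.
Variable d : A -> A.
Variable tau : A.
Hypothesis Fmul : forall a b i, F (a * b) i = fps_mul (F a) (F b) i.
Hypothesis F1 : forall i, F 1 i = if i == 0%N then 1 else 0.
Hypothesis Fder : forall g i, d (F g i) = F (d g) i.
Hypothesis dM : forall a b, d (a * b) = d a * b + a * d b.
Hypothesis d1 : d 1 = 0.
Hypothesis tu : tau \is a GRing.unit.

Let w i := F tau i * tau^-1.
Let h i := tau * F (tau^-1) i.

Lemma key_mul i : fps_mul w h i = if i == 0%N then 1 else 0.
Proof.
rewrite -F1 -(divrr tu) Fmul; apply: eq_bigr => j _.
by rewrite /w /h mulrA mulrVK.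
Qed.

Lemma key_unit : w 0%N \is a GRing.unit.
Proof.
apply/unitrP; exists (h 0%N); have := key_mul 0.
rewrite /fps_mul big_ord1 /= => H; split => //; by rewrite mulrC.
Qed.

Lemma key_inv i : fps_inv w i = h i.
Proof. by symmetry; apply: fps_inv_uniq key_unit key_mul i. Qed.

Lemma key_main i : fps_mul (fun j => d (w j)) (fps_inv w) i =
  F (d tau * tau^-1) i - (if i == 0%N then d tau * tau^-1 else 0).
Proof.
have hdu : d (tau^-1) = - (tau^-1 * d tau * tau^-1).
  have := d1; rewrite -(divrr tu) dM => /eqP; rewrite addrC addr_eq0 => /eqP H.
  by rewrite -[d tau^-1](mulKr tu) H mulrN mulrA.
have ut : tau^-1 * tau = 1 by rewrite mulVr.
rewrite (@fps_mul_ext A _ (fun j => d (w j)) _ h i (fun j => erefl) key_inv).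
have -> : fps_mul (fun j => d (w j)) h i =
   fps_mul (F (d tau)) (F tau^-1) i - (d tau * tau^-1) * fps_mul (F tau) (F tau^-1) i.
  rewrite /fps_mul mulr_sumr -sumrB; apply: eq_bigr => j _.
  rewrite /w /h dM Fder hdu.
  transitivity (F (d tau) j * F tau^-1 (i - j) - d tau * tau^-1 * (F tau j * F tau^-1 (i - j))
     + (tau^-1 * tau - 1) * (F (d tau) j * F tau^-1 (i - j)
         - F tau j * tau^-1 * d tau * F tau^-1 (i - j))).
    ring.
  by rewrite ut subrr mul0r addr0.
rewrite -Fmul -Fmul divrr // F1.
by case: (i == 0%N); rewrite ?mulr1 ?mulr0.
Qed.

End Key.



Section Comm.
Variable A : comUnitRingType.
Variable d : nat -> A -> A.
Variable e : A -> A.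
Hypothesis eD : forall a b, e (a + b) = e a + e b.
Hypothesis eM : forall a b, e (a * b) = e a * b + a * e b.
Hypothesis eC : forall n : nat, e ((n.+1)%:R^-1) = 0.
Hypothesis ed : forall j a, e (d j a) = d j (e a).

Lemma exp_ser_comm g N : e (exp_ser d g N) = exp_ser d (e g) N.
Proof.
move: N; apply: ltn_ind => -[|N] IH //.
rewrite !exp_serS eM eC mul0r add0r; congr (_ * _).
have e0 : e 0 = 0 by apply: (@addrI _ (e 0)); rewrite -eD !addr0.
rewrite (big_morph e eD e0); apply: eq_bigr => j _.
by rewrite ed IH // ltnS leq_subr.
Qed.
End Comm.

Section Der.
Variable A : comUnitRingType.
Variable D : ebth_data A.
Hypothesis ax : ebth_axioms D.

Lemma der0 v : der D v 0 = 0.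
Proof. by apply: (@addrI _ (der D v 0)); rewrite -(der_add ax) !addr0. Qed.

Lemma derN v a : der D v (- a) = - der D v a.
Proof. by apply: (@addrI _ (der D v a)); rewrite -(der_add ax) !subrr der0. Qed.

Lemma der1 v : der D v 1 = 0.
Proof.
apply: (@addrI _ (der D v 1)); rewrite addr0.
by rewrite -{3}(mulr1 1) (der_mul ax) mulr1 mul1r.
Qed.

Lemma der_nat v n : der D v (n%:R) = 0.
Proof. by elim: n => [|n IH]; rewrite ?der0 // -addn1 natrD (der_add ax) IH der1 addr0. Qed.

Lemma der_natinv v n : der D v ((n.+1)%:R^-1) = 0.
Proof.
have hu := nat_unit ax n.
have H := der1 v; rewrite -(divrr hu) (der_mul ax) der_nat mul0r add0r in H.
have -> : der D v (n.+1%:R^-1) = (n.+1)%:R^-1 * ((n.+1)%:R * der D v ((n.+1)%:R^-1)).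
  by rewrite mulrA mulVr // mul1r.
by rewrite H mulr0.
Qed.

Lemma sh0 : sh D 0 = 0.
Proof. by apply: (@addrI _ (sh D 0)); rewrite -(sh_add ax) !addr0. Qed.

Definition dT (j : nat) (a : A) := - der D (VT j) a.
Definition dTb (j : nat) (a : A) := der D (VTb j) a.

Lemma dT_D j a b : dT j (a + b) = dT j a + dT j b.
Proof. by rewrite /dT (der_add ax) opprD. Qed.
Lemma dT_M j a b : dT j (a * b) = dT j a * b + a * dT j b.
Proof. by rewrite /dT (der_mul ax) opprD mulNr mulrN. Qed.
Lemma dTb_D j a b : dTb j (a + b) = dTb j a + dTb j b.
Proof. exact: (der_add ax). Qed.
Lemma dTb_M j a b : dTb j (a * b) = dTb j a * b + a * dTb j b.
Proof. exact: (der_mul ax). Qed.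

Lemma Gser_mul a b i : Gser D (a * b) i = fps_mul (Gser D a) (Gser D b) i.
Proof. exact: (@exp_ser_mul A dT dT_D dT_M (nat_unit ax)). Qed.

Lemma Gbser_mul a b i : Gbser D (a * b) i = fps_mul (Gbser D a) (Gbser D b) i.
Proof.
rewrite /Gbser (@exp_ser_mul A dTb dTb_D dTb_M (nat_unit ax)).
rewrite (big_morph (sh D) (sh_add ax) sh0); apply: eq_bigr => j _.
by rewrite (sh_mul ax).
Qed.

Lemma Gser_1 i : Gser D 1 i = if i == 0%N then 1 else 0.
Proof.
case: i => [//|i] /=; apply: (@exp_ser_const A dT dT_D).
by move=> j; rewrite /dT der1 oppr0.
Qed.

Lemma Gbser_1 i : Gbser D 1 i = if i == 0%N then 1 else 0.
Proof.
rewrite /Gbser; case: i => [|i] /=; first exact: (sh_one ax).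
rewrite (@exp_ser_const A dTb dTb_D) ?sh0 // => j.
by rewrite /dTb der1.
Qed.

Lemma Gser_der v g i : der D v (Gser D g i) = Gser D (der D v g) i.
Proof.
apply: (@exp_ser_comm A dT); [exact: (der_add ax) | exact: (der_mul ax) |
  exact: der_natinv |].
by move=> j a; rewrite /dT derN (der_comm ax).
Qed.

Lemma Gbser_der v g i : der D v (Gbser D g i) = Gbser D (der D v g) i.
Proof.
rewrite /Gbser (der_sh ax); congr (sh D _).
apply: (@exp_ser_comm A dTb); [exact: (der_add ax) | exact: (der_mul ax) |
  exact: der_natinv |].
by move=> j a; rewrite /dTb (der_comm ax).
Qed.

End Der.

Lemma asvm_gen (A : comUnitRingType) (D : ebth_data A) (tau : A) v (a : op A) :
  ebth_axioms D -> tau \is a GRing.unit ->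
  (forall l, dcoef (der D v) (Wop D tau) l = - mul_lo D (-1) 0 (negp a) (Wop D tau) l
     /\ dcoef (der D v) (Wbop D tau) l = mul_up D 0 0 (posp a) (Wbop D tau) l) ->
  ASvM D tau a (der D v tau).
Proof.
move=> ax tu H; split => i.
  rewrite (@fps_mul_ext A _ (fun j => der D v (wco D tau j)) _ (fps_inv (wco D tau)) i);
    [|move=> j|by []].
    have HH := (@key_main _ _ _ _ (@Gser_mul _ _ ax) (@Gser_1 _ _ ax) (@Gser_der _ _ ax v) (der_mul ax v) (@der1 _ _ ax v) tu i). exact HH.
  rewrite -(proj1 (H (- j%:Z))) /dcoef /Wop oppr_le0 /=.
  by rewrite abszN absz_nat.
rewrite (@fps_mul_ext A _ (fun j => der D v (wbco D tau j)) _ (fps_inv (wbco D tau)) i);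
  [|move=> j|by []].
  exact: (@key_main _ _ _ _ (@Gbser_mul _ _ ax) (@Gbser_1 _ _ ax) (@Gbser_der _ _ ax v) (der_mul ax v) (@der1 _ _ ax v) tu).
by rewrite -(proj2 (H j%:Z)) /dcoef /Wbop /=.
Qed.

Lemma asvm_s (A : comUnitRingType) (D : ebth_data A) (tau : A) :
  ebth_axioms D -> tau \is a GRing.unit ->
  ASvM D tau (lam A 0) (svar D * tau).
Proof.
move=> ax tu; rewrite /ASvM /= mulrK //.
split => i.
  rewrite /fps_mul big1; last first.
    move=> j _; rewrite /mul_lo; case: ifP => _; last by rewrite oppr0 mul0r.
    rewrite big1 ?oppr0 ?mul0r // => k _.
    have -> : forall l, negp (lam A 0) l = 0.
      move=> l; rewrite /negp /lam; case: ifP => // Hl; case: ifP => // /eqP Hl0.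
      by rewrite Hl0 ltxx in Hl.
    by rewrite mul0r.
  case: i => [|i]; first by rewrite subrr.
  rewrite /Gser (@exp_ser_const A (@dT A D) (@dT_D _ _ ax)) ?subr0 // => j.
  by rewrite /dT (der_svar_other ax) ?oppr0.
rewrite (@fps_mul_ext A _ (wbco D tau) _ (fps_inv (wbco D tau)) i); [|move=> j|by []].
  rewrite (@fps_mul_ext A _ (wbco D tau) _ _ i (fun j => erefl) (@key_inv _ _ _ (@Gbser_mul _ _ ax) (@Gbser_1 _ _ ax) tu)).
  rewrite (@key_mul _ _ _ (@Gbser_mul _ _ ax) (@Gbser_1 _ _ ax) tu).
  case: i => [|i] /=.
    by rewrite /Gbser /= (sh_svar ax) addrAC subrr add0r.
  rewrite /Gbser (@exp_ser_const A (@dTb A D) (@dTb_D _ _ ax)) ?(@sh0 _ _ ax) ?subr0 // => j.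
  by rewrite /dTb (der_svar_other ax).
rewrite /mul_up addr0 (_ : (0 <= j%:Z) = true) // !subr0 big_ord_recl /= big1.
  by rewrite !add0r subr0 addr0 /posp /lam /Wbop /= mul1r.
move=> k _; rewrite /posp /lam add0r /bump leq0n add1n /=.
by rewrite mul0r.
Qed.

Theorem lemma4p2 (A : comUnitRingType) (D : ebth_data A) (k m : nat) (tau : A) :
  ebth_axioms D -> (0 < k)%N -> (0 < m)%N -> is_tau D k m tau ->
  (forall n : nat, (0 < n)%N ->
     ASvM D tau (Lk D tau n) (der D (VT n) tau)
     /\ ASvM D tau (Lm D tau n) (der D (VTb n) tau))
  /\ (forall p : nat, ASvM D tau (LplogL2 D tau k m p) (der D (VX p) tau))
  /\ ASvM D tau (lam A 0) (svar D * tau).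
Proof.
move=> ax _ _ [tu _ Ht Htb Hx]; split; [|split].
- move=> n Hn; split; apply: asvm_gen => //; [exact: Ht | exact: Htb].
- move=> p; apply: asvm_gen => //; exact: Hx.
- exact: asvm_s.
Qed.
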